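(* Let $f:V_n^{(p)}\to\mathbb{F}_p$ be an $s$-plateaued function belonging to $\mathscr{F}$, with dual $f^*$. Then: (1) for every $a\in\mathbb{F}_p^*$ and $\alpha\in V_n^{(p)}$: if $\alpha\notin\mathrm{Supp}(\widehat{\chi_f})$ then $a\alpha\notin\mathrm{Supp}(\widehat{\chi_f})$; if $\alpha\in B_+(f)$ then $a\alpha\in B_+(f)$; if $\alpha\in B_-(f)$ then $a\alpha\in B_-(f)$; (2) there is a positive integer $h$ with $\gcd(h-1,p-1)=1$ such that $f^*(a\alpha)=a^hf^*(\alpha)$ for all $a\in\mathbb{F}_p^*$, $\alpha\in B_+(f)$, and there is a positive integer $h'$ with $\gcd(h'-1,p-1)=1$ such that $f^*(a\alpha)=a^{h'}f^*(\alpha)$ for all $a\in\mathbb{F}_p^*$, $\alpha\in B_-(f)$; (3) the types of $f$ and $f^*$ are the same if $p^{n+s}\equiv1\pmod4$, and different if $p^{n+s}\equiv3\pmod4$.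
   Context: Let $p$ be an odd prime, $\mathbb{F}_p^*=\mathbb{F}_p\setminus\{0\}$, $V_n^{(p)}$ an $n$-dimensional $\mathbb{F}_p$-vector space with a non-degenerate symmetric bilinear form $\langle\cdot,\cdot\rangle_n$, $\xi_p=e^{2\pi\sqrt{-1}/p}$. For $f:V_n^{(p)}\to\mathbb{F}_p$, $\widehat{\chi_f}(\alpha)=\sum_x\xi_p^{f(x)-\langle\alpha,x\rangle_n}$; $f$ is $s$-plateaued ($0\le s\le n$) if $|\widehat{\chi_f}(\alpha)|\in\{0,p^{(n+s)/2}\}$ for all $\alpha$, with $\mathrm{Supp}(\widehat{\chi_f})$ where $p^{(n+s)/2}$ is attained. $\mu=1$ if $p^{n+s}\equiv1\pmod4$, else $\sqrt{-1}$. For $\alpha\in\mathrm{Supp}(\widehat{\chi_f})$, $\widehat{\chi_f}(\alpha)=\epsilon_\alpha\mu p^{(n+s)/2}\xi_p^{f^*(\alpha)}$ with unique $\epsilon_\alpha\in\{\pm1\}$, $f^*(\alpha)\in\mathbb{F}_p$; $B_\pm(f)=\{\alpha\in\mathrm{Supp}(\widehat{\chi_f}):\epsilon_\alpha=\pm1\}$; when $0\in\mathrm{Supp}(\widehat{\chi_f})$, the type of $f$ is $(+)$ if $\epsilon_0=1$ and $(-)$ if $\epsilon_0=-1$. $f^*$ is bent relative to $\mathrm{Supp}(\widehat{\chi_f})$ if $\widehat{\chi_{f^*}}(\alpha)=\sum_{x\in\mathrm{Supp}(\widehat{\chi_f})}\xi_p^{f^*(x)-\langle\alpha,x\rangle_n}$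 has absolute value $p^{(n-s)/2}$ for all $\alpha$; then $\widehat{\chi_{f^*}}(\alpha)=\epsilon^*_\alpha\mu p^{(n-s)/2}\xi_p^{f(-\alpha)}$, $\epsilon^*_\alpha\in\{\pm1\}$, $B_\pm(f^* )=\{\alpha:\epsilon^*_\alpha=\pm1\}$, and the type of $f^*$ is $(+)$ if $\epsilon^*_0=1$, $(-)$ if $\epsilon^*_0=-1$. Class $\mathscr{F}$: $s$-plateaued $f$ with (1) $f(0)=0$; (2) $f^*$ bent relative to $\mathrm{Supp}(\widehat{\chi_f})$; (3) $aB_\pm(f^* )\subseteq B_\pm(f^* )$ for all $a\in\mathbb{F}_p^*$; (4) integers $2\le t,t'\le p-1$, $\gcd(t-1,p-1)=\gcd(t'-1,p-1)=1$, $f(ax)=a^tf(x)$ for $a\in\mathbb{F}_p^*,x\in B_+(f^* )$ and $f(ax)=a^{t'}f(x)$ for $a\in\mathbb{F}_p^*,x\in B_-(f^* )$. Functions in $\mathscr{F}$ satisfy $0\in\mathrm{Supp}(\widehat{\chi_f})$. *)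

(* Defs.v *)
(* F_p = 'F_p, V_n^{(p)} = 'rV['F_p]_n, complex numbers = algC. *)
From HB Require Import structures.
From mathcomp Require Import all_boot all_order all_algebra all_field.
Set Implicit Arguments.
Unset Strict Implicit.
Unset Printing Implicit Defensive.
Import Order.TTheory GRing.Theory Num.Theory.
Local Open Scope ring_scope.

Section Plateaued.
Variables (p n : nat).

Definition V := 'rV['F_p]_n.

(* The bilinear form <a,x>_n given by a (symmetric, invertible) Gram matrix M. *)
Definition bform (M : 'M['F_p]_n) (a x : V) : 'F_p := (a *m M *m x^T) 0 0.

Definition nondeg_symmetric (M : 'M['F_p]_n) : Prop :=
  M^T = M /\ M \in unitmx.

(* xi_p = e^{2 pi i / p}: p.-root (-1) is e^{i pi / p} (minimal nonneg. argument). *)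
Definition xi : algC := (p.-root (-1)) ^+ 2.

Definition xiF (c : 'F_p) : algC := xi ^+ (val c).

Definition walsh (M : 'M['F_p]_n) (f : V -> 'F_p) (alpha : V) : algC :=
  \sum_(x : V) xiF (f x - bform M alpha x).

Definition ppow (k : nat) : algC := sqrtC ((p ^ k)%:R).

Definition plateaued (M : 'M['F_p]_n) (s : nat) (f : V -> 'F_p) : Prop :=
  (s <= n)%N /\
  forall alpha, `|walsh M f alpha| = 0 \/ `|walsh M f alpha| = ppow (n + s).

Definition supp (M : 'M['F_p]_n) (s : nat) (f : V -> 'F_p) : {set V} :=
  [set alpha | `|walsh M f alpha| == ppow (n + s)].

Definition mu (s : nat) : algC := if ((p ^ (n + s)) %% 4 == 1)%N then 1 else 'i.

Definition is_dual (M : 'M['F_p]_n) (s : nat) (f : V -> 'F_p)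
    (eps : V -> algC) (fstar : V -> 'F_p) : Prop :=
  forall alpha, alpha \in supp M s f ->
    (eps alpha = 1 \/ eps alpha = -1) /\
    walsh M f alpha = eps alpha * mu s * ppow (n + s) * xiF (fstar alpha).

Definition Bplus M s f (eps : V -> algC) : {set V} :=
  [set alpha in supp M s f | eps alpha == 1].
Definition Bminus M s f (eps : V -> algC) : {set V} :=
  [set alpha in supp M s f | eps alpha == -1].

Definition walsh_dual (M : 'M['F_p]_n) (s : nat) (f : V -> 'F_p)
    (fstar : V -> 'F_p) (alpha : V) : algC :=
  \sum_(x in supp M s f) xiF (fstar x - bform M alpha x).

Definition bent_rel (M : 'M['F_p]_n) (s : nat) (f fstar : V -> 'F_p) : Prop :=
  forall alpha, `|walsh_dual M s f fstar alpha| = ppow (n - s).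

Definition is_dual_sign (M : 'M['F_p]_n) (s : nat) (f fstar : V -> 'F_p)
    (epss : V -> algC) : Prop :=
  forall alpha, (epss alpha = 1 \/ epss alpha = -1) /\
    walsh_dual M s f fstar alpha = epss alpha * mu s * ppow (n - s) * xiF (f (- alpha)).

Definition BSplus (epss : V -> algC) : {set V} := [set alpha | epss alpha == 1].
Definition BSminus (epss : V -> algC) : {set V} := [set alpha | epss alpha == -1].

(* type (+) of f iff eps_0 = 1; type (+) of f* iff eps*_0 = 1 *)
Definition type_plus (e : V -> algC) : bool := e 0 == 1.

Definition classF (M : 'M['F_p]_n) (s : nat) (f fstar : V -> 'F_p)
    (epss : V -> algC) : Prop :=
  [/\ f 0 = 0,
      bent_rel M s f fstar,
      (forall a : 'F_p, a != 0 -> forall x, x \in BSplus epss -> a *: x \in BSplus epss)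
        /\ (forall a : 'F_p, a != 0 -> forall x, x \in BSminus epss -> a *: x \in BSminus epss)
    & exists t t' : nat,
      [/\ (2 <= t <= p - 1)%N /\ (2 <= t' <= p - 1)%N,
          gcdn (t - 1) (p - 1) = 1%N, gcdn (t' - 1) (p - 1) = 1%N,
          (forall a : 'F_p, a != 0 -> forall x, x \in BSplus epss -> f (a *: x) = a ^+ t * f x)
        & (forall a : 'F_p, a != 0 -> forall x, x \in BSminus epss -> f (a *: x) = a ^+ t' * f x)]].

End Plateaued.

(* Main.v *)
Require Import Defs.
From HB Require Import structures.
From mathcomp Require Import all_boot all_order all_algebra all_field.
From mathcomp Require Import zify ring.
Import Order.TTheory GRing.Theory Num.Theory.
Local Open Scope ring_scope.

Section Basics.
Variable p : nat.
Hypothesis pr : prime p.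
Hypothesis podd : odd p.

Let p_gt0 : (0 < p)%N. Proof. exact: prime_gt0. Qed.
Let p_gt1 : (1 < p)%N. Proof. exact: prime_gt1. Qed.

Lemma root_neq_N1 : p.-root (-1 : algC) != -1.
Proof.
apply/negP => /eqP Dr.
have [z prim_z] := C_prim_root_exists p_gt0.
have zp1 : z ^+ p = 1 := prim_expr_order prim_z.
have w0p : (- z) ^+ p = -1.
  by rewrite exprNn -signr_odd podd zp1 mulr1 expr1.
have [w [wp wIm wRe]] : exists w : algC, [/\ w ^+ p = -1, 0 <= 'Im w & 'Re w = - 'Re z].
  have Rim : 'Im (- z) \is Num.real by apply: Creal_Im.
  case: (real_ge0P Rim) => [h|h].
    by exists (- z); split => //; rewrite raddfN.
  exists ((- z)^*); split.
  - by rewrite -rmorphXn w0p rmorphN rmorph1.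
  - by rewrite Im_conj oppr_ge0 ltW.
  - by rewrite Re_conj raddfN.
have Rm1 : 'Re (-1 : algC) = -1 by apply/Creal_ReP; rewrite rpredN rpred1.
have := rootC_Re_max p_gt0 wp wIm.
rewrite Dr wRe Rm1 lerN2 => Rez.
have nz1 : `|z| = 1.
  apply/eqP; rewrite -(pexpr_eq1 p_gt0) ?normr_ge0 //.
  by rewrite -normrX zp1 normr1.
have := leif_Re_Creal z; rewrite nz1 => hle.
have eqRe : 'Re z = 1 by apply/eqP; rewrite eq_le Rez (hle.1).
move: hle => [_]; rewrite eqRe eqxx => /esym z_ge0.
have z1 : z = 1 by rewrite -[z]ger0_norm // nz1.
move: (prim_order_dvd prim_z 1); rewrite z1 expr1 eqxx.
by rewrite dvdn1 => /eqP p1; move: p_gt1; rewrite p1.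
Qed.

Lemma xi_neq1 : xi p != 1.
Proof.
rewrite /xi sqrf_eq1 negb_or root_neq_N1 andbT.
apply/negP=> /eqP r1.
have := rootCK p_gt0 (-1 : algC); rewrite r1 expr1n => h.
by move: (@ltr01 algC); rewrite h oppr_gt0 ltr10.
Qed.

Lemma xi_exp_p : xi p ^+ p = 1.
Proof. by rewrite /xi -exprM mulnC exprM rootCK // expr2 mulrNN mulr1. Qed.

Lemma xi_prim : p.-primitive_root (xi p).
Proof.
have [m pm mp] := prim_order_exists p_gt0 xi_exp_p.
case/primeP: pr => _ /(_ m mp) /orP [/eqP m1 | /eqP mp']; last by move: pm; rewrite mp'.
by move: (prim_expr_order pm); rewrite m1 expr1 => /eqP; rewrite (negbTE xi_neq1).
Qed.



Lemma Fp_valK (x : 'F_p) : ((val x)%:R : 'F_p) = x.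
Proof. exact: natr_Zp. Qed.

Lemma Fp_val_lt (x : 'F_p) : (val x < p)%N.
Proof. have : (val x < (Zp_trunc (pdiv p)).+2)%N by exact: ltn_ord. move: (val x) => k. by rewrite (Fp_cast pr). Qed.

Lemma val_FpD (a b : 'F_p) : nat_of_ord (a + b) = ((nat_of_ord a + nat_of_ord b) %% p)%N.
Proof. by rewrite -{1}(Fp_valK a) -{1}(Fp_valK b) -natrD val_Fp_nat. Qed.

Lemma val_FpM (a b : 'F_p) : nat_of_ord (a * b) = ((nat_of_ord a * nat_of_ord b) %% p)%N.
Proof. by rewrite -{1}(Fp_valK a) -{1}(Fp_valK b) -natrM val_Fp_nat. Qed.

Lemma xiFE (a : 'F_p) : xiF a = xi p ^+ (nat_of_ord a). Proof. by []. Qed.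

Lemma xiF_add (a b : 'F_p) : xiF (a + b) = xiF a * xiF b.
Proof. by rewrite !xiFE val_FpD (prim_expr_mod xi_prim) exprD. Qed.

Lemma xiF0 : xiF (0 : 'F_p) = 1.
Proof. by rewrite /xiF expr0. Qed.

Lemma xiF_neq0 (a : 'F_p) : xiF a != 0.
Proof. by rewrite /xiF expf_neq0 // (prim_root_eq0 xi_prim) -lt0n. Qed.

Lemma xiF_opp (a : 'F_p) : xiF (- a) = (xiF a)^-1.
Proof.
apply: (mulIf (xiF_neq0 a)); rewrite -xiF_add addNr xiF0 mulVf //; exact: xiF_neq0.
Qed.

Lemma xiF_sub (a b : 'F_p) : xiF (a - b) = xiF a / xiF b.
Proof. by rewrite xiF_add xiF_opp. Qed.

Lemma xiF_eq1 (a : 'F_p) : (xiF a == 1) = (a == 0).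
Proof.
rewrite /xiF -(prim_order_dvd xi_prim).
apply/idP/idP => [h|/eqP->]; last by rewrite dvdn0.
apply/eqP/val_inj => /=; move: h (Fp_val_lt a).
move=> h lt; apply/eqP; rewrite -leqn0 leqNgt; apply/negP => pos.
by have := dvdn_leq pos h; rewrite leqNgt lt.
Qed.

Lemma xiF_inj : injective (@xiF p).
Proof.
move=> a b h; apply/eqP; rewrite -subr_eq0 -xiF_eq1 xiF_sub h divff //; exact: xiF_neq0.
Qed.

Lemma xiF_mulX (a b : 'F_p) : xiF (a * b) = xiF a ^+ val b.
Proof. by rewrite !xiFE val_FpM (prim_expr_mod xi_prim) exprM. Qed.

Lemma xiF_nat (k : nat) : xiF (k%:R : 'F_p) = xi p ^+ k.
Proof. by rewrite !xiFE val_Fp_nat // (prim_expr_mod xi_prim). Qed.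


Lemma p_ge3 : (2 < p)%N.
Proof. by case: p p_gt1 podd => [|[|[|]]]. Qed.

Lemma galois_exists (b : 'F_p) : b != 0 ->
  {u : {rmorphism algC -> algC} | forall x : 'F_p, u (xiF x) = xiF (b * x)}.
Proof.
move=> bnz.
have cop : coprime (nat_of_ord b) p.
  rewrite coprime_sym prime_coprime //; apply/negP => /(dvdn_leq _) h.
  have b0 : (0 < nat_of_ord b)%N.
    by rewrite lt0n; apply: contra bnz => /eqP h0; apply/eqP/val_inj.
  by have := h b0; rewrite leqNgt Fp_val_lt.
have [u Hu] := Qn_aut_exists cop.
exists u => x; rewrite mulrC xiF_mulX Hu //.
by rewrite xiFE -exprM mulnC exprM (prim_expr_order xi_prim) expr1n.
Qed.

Lemma Fp_exp_pm1 (a : 'F_p) : a != 0 -> a ^+ (p.-1) = 1.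
Proof.
move=> anz; apply: (mulIf anz); rewrite mul1r -exprSr prednK //.
by have := expf_card a; rewrite card_Fp.
Qed.

Lemma exp_inverse (t : nat) : (2 <= t)%N -> gcdn (t - 1) (p - 1) = 1%N ->
  exists u : nat, [/\ (0 < u.+1)%N, gcdn u (p - 1) = 1%N &
     forall a : 'F_p, a != 0 -> (a ^+ u) ^+ (t - 1) = a].
Proof.
move=> t2 g1.
have t1 : (0 < t - 1)%N by rewrite subn_gt0.
case: (egcdnP (p - 1) t1) => km kn def lt.
rewrite g1 in def.
exists km; split => //.
  apply/eqP; rewrite -/(coprime km (p - 1)).
  have : coprime (km * (t - 1)) (p - 1).
    by rewrite -coprime_modl def modnMDl modn_small ?coprime1n //; have := p_ge3; lia.
  by rewrite coprimeMl => /andP[].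
move=> a anz; rewrite -exprM def exprD expr1 mulnC exprM.
by rewrite subn1 Fp_exp_pm1 // expr1n mul1r.
Qed.
Variables (n : nat) (M : 'M['F_p]_n).

Lemma bformDr (a x y : V p n) : bform M a (x + y) = bform M a x + bform M a y.
Proof. by rewrite /bform linearD /= mulmxDr mxE. Qed.
Lemma bformDl (a b x : V p n) : bform M (a + b) x = bform M a x + bform M b x.
Proof. by rewrite /bform !mulmxDl mxE. Qed.
Lemma bformZr (a x : V p n) c : bform M a (c *: x) = c * bform M a x.
Proof. by rewrite /bform linearZ /= -scalemxAr mxE. Qed.
Lemma bformZl (a x : V p n) c : bform M (c *: a) x = c * bform M a x.
Proof. by rewrite /bform -!scalemxAl mxE. Qed.
Lemma bformNr (a x : V p n) : bform M a (- x) = - bform M a x.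
Proof. by rewrite -scaleN1r bformZr mulN1r. Qed.
Lemma bformNl (a x : V p n) : bform M (- a) x = - bform M a x.
Proof. by rewrite -scaleN1r bformZl mulN1r. Qed.
Lemma bformBr (a x y : V p n) : bform M a (x - y) = bform M a x - bform M a y.
Proof. by rewrite bformDr bformNr. Qed.
Lemma bform0r (a : V p n) : bform M a 0 = 0.
Proof. by rewrite -(scale0r (0 : V p n)) bformZr mul0r. Qed.
Lemma bform0l (a : V p n) : bform M 0 a = 0.
Proof. by rewrite -(scale0r (0 : V p n)) bformZl mul0r. Qed.
Lemma bform_sym (a x : V p n) : M^T = M -> bform M a x = bform M x a.
Proof.
move=> MT; rewrite /bform -[in LHS](trmxK (a *m M *m x^T)) mxE.
by rewrite !trmx_mul trmxK MT mulmxA.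
Qed.

Hypothesis HM : nondeg_symmetric M.

Lemma card_V : #|{: V p n}| = (p ^ n)%N.
Proof. by rewrite /V card_mx card_Fp // mul1n. Qed.

Lemma ortho (w : V p n) :
  \sum_(a : V p n) xiF (bform M a w) = if w == 0 then (p ^ n)%:R else 0.
Proof.
case: eqP => [->|/eqP wnz].
  under eq_bigr do rewrite bform0r xiF0.
  by rewrite sumr_const card_V.
set v := M *m w^T.
have vnz : v != 0.
  apply: contra wnz => /eqP v0; apply/eqP.
  have : invmx M *m v = 0 by rewrite v0 mulmx0.
  rewrite /v mulmxA mulVmx; last by case: HM.
  by rewrite mul1mx => /(congr1 trmx); rewrite trmxK trmx0.
have [j vj] : exists j, v j 0 != 0.
  apply/existsP; apply: contraR vnz => /existsPn h; apply/eqP/matrixP => i k.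
  by rewrite (ord1 k); move: (h i); rewrite negbK => /eqP ->; rewrite mxE.
set a0 : V p n := (v j 0)^-1 *: delta_mx 0 j.
have Ba0 : bform M a0 w = 1.
  rewrite /bform -mulmxA -/v /a0 -scalemxAl mxE -rowE.
  have -> : row j v 0 0 = v j 0 by rewrite !mxE.
  by rewrite mulVf.
set S := \sum_(a : V p n) xiF (bform M a w).
have : S = S * xi p.
  rewrite {1}/S (reindex_inj (can_inj (addrK a0))) /=.
  rewrite mulr_suml; apply: eq_bigr => a _.
  by rewrite bformDl Ba0 xiF_add (xiF_nat 1).
move/eqP; rewrite -subr_eq0 -{1}[S]mulr1 -mulrBr mulf_eq0 subr_eq0 eq_sym.
by rewrite [1 == _]eq_sym (negbTE xi_neq1) orbF eq_sym => /eqP.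
Qed.

Variables (s : nat) (f fstar : V p n -> 'F_p) (eps epss : V p n -> algC).
Hypothesis Hpl : plateaued M s f.
Hypothesis Hd : is_dual M s f eps fstar.
Hypothesis Hds : is_dual_sign M s f fstar epss.
Hypothesis HF : classF M s f fstar epss.

Let MT : M^T = M. Proof. by case: HM. Qed.

Definition TS (sg : algC) : {set V p n} := [set y | epss y == sg].

Lemma TS_closed sg : sg = 1 \/ sg = -1 ->
  forall a : 'F_p, a != 0 -> forall x, x \in TS sg -> a *: x \in TS sg.
Proof. by case: HF => _ _ [H1 H2] _ [] ->; [exact: H1 | exact: H2]. Qed.

Lemma epss_pm y : epss y = 1 \/ epss y = -1.
Proof. exact: (Hds y).1. Qed.

Let pm1 : (1:algC) = 1 \/ (1:algC) = -1. Proof. by left. Qed.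
Let pmN1 : (-1:algC) = 1 \/ (-1:algC) = -1. Proof. by right. Qed.

Lemma epssN y : epss (- y) = epss y.
Proof.
have m1 : (-1 : 'F_p) != 0 by rewrite oppr_eq0 oner_eq0.
case: (epss_pm y) => E.
- have : y \in TS 1 by rewrite inE E.
  by move/(@TS_closed 1 pm1 _ m1 y); rewrite scaleN1r inE E => /eqP.
- have : y \in TS (-1) by rewrite inE E.
  by move/(@TS_closed (-1) pmN1 _ m1 y); rewrite scaleN1r inE E => /eqP.
Qed.

Lemma dual_inv z :
  mu p n s * ppow p (n - s) * (\sum_y epss y * xiF (f y - bform M z y))
  = (p ^ n)%:R * ((z \in supp M s f)%:R * xiF (fstar z)).
Proof.
have E1 : \sum_(a : V p n) walsh_dual M s f fstar a * xiF (bform M a z)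
        = mu p n s * ppow p (n - s) * (\sum_y epss y * xiF (f y - bform M z y)).
  under eq_bigr do rewrite (Hds _).2.
  rewrite (reindex_inj (inv_inj (@opprK _))) /= mulr_sumr; apply: eq_bigr => y _.
  rewrite opprK epssN bformNl (bform_sym _ _ MT) -mulrA -xiF_add.
  by ring.
rewrite -E1.
under eq_bigr do rewrite /walsh_dual mulr_suml.
rewrite exchange_big /=.
under eq_bigr => x _.
  under eq_bigr => a _.
    rewrite -xiF_add (_ : _ - _ + _ = fstar x + bform M a (z - x)); last by rewrite bformBr; ring.
    rewrite xiF_add.
    over.
  rewrite -mulr_sumr ortho.
  over.
case: (boolP (z \in supp M s f)) => zS /=.
- rewrite (bigD1 z) //= subrr eqxx big1 ?addr0; first by rewrite mul1r mulrC.
  by move=> x /andP[_ xz]; rewrite subr_eq0 eq_sym (negbTE xz) mulr0.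
- rewrite big1 ?mul0r ?mulr0 //.
  move=> x xS; rewrite subr_eq0; case: eqP => [zx|]; last by rewrite mulr0.
  by move: zS; rewrite zx xS.
Qed.

Definition W (sg : algC) (z : V p n) : algC :=
  \sum_(y in TS sg) xiF (f y - bform M z y).

Let N1neq1 : ((-1 : algC) == 1) = false.
Proof. by apply: lt_eqF; apply: lt_trans (@ltrN10 algC) ltr01. Qed.

Let nepss1 y : (epss y != 1) = (epss y == -1).
Proof. by case: (epss_pm y) => ->; rewrite ?eqxx ?N1neq1 // eq_sym N1neq1. Qed.

Lemma walsh_split z : walsh M f z = W 1 z + W (-1) z.
Proof.
rewrite /walsh (bigID (fun y => epss y == 1)) /=; congr (_ + _).
  by apply: eq_bigl => y; rewrite inE.
by apply: eq_bigl => y; rewrite inE nepss1.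
Qed.

Lemma sum_eps_split z :
  \sum_y epss y * xiF (f y - bform M z y) = W 1 z - W (-1) z.
Proof.
rewrite (bigID (fun y => epss y == 1)) /=; congr (_ + _).
  by apply: eq_big => y; rewrite ?inE // => /eqP ->; rewrite mul1r.
rewrite /W -sumrN; apply: eq_big => y; rewrite ?inE ?nepss1 //.
by move=> /eqP ->; rewrite mulN1r.
Qed.

Lemma walsh_out z : z \notin supp M s f -> walsh M f z = 0.
Proof.
rewrite inE => /negP nS; case: (Hpl.2 z) => [/eqP|h].
  by rewrite normr_eq0 => /eqP.
by case: nS; rewrite h.
Qed.

Definition K := mu p n s * ppow p (n + s).
Definition eta := mu p n s ^+ 2.

Lemma walsh_in z : z \in supp M s f -> walsh M f z = eps z * K * xiF (fstar z).
Proof. by move=> zS; rewrite (Hd z zS).2 /K !mulrA. Qed.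

Lemma eta_pm : eta = 1 \/ eta = -1.
Proof. by rewrite /eta /mu; case: ifP => _; [left; rewrite expr1n | right; rewrite sqrCi]. Qed.

Lemma mu_neq0 : mu p n s != 0.
Proof. by rewrite /mu; case: ifP => _; rewrite ?oner_eq0 ?neq0Ci. Qed.

Lemma ppow_neq0 k : ppow p k != 0.
Proof. by rewrite /ppow sqrtC_eq0 pnatr_eq0 expn_eq0 negb_and (gtn_eqF p_gt0). Qed.

Lemma K_neq0 : K != 0.
Proof. by rewrite /K mulf_neq0 ?mu_neq0 ?ppow_neq0. Qed.

Lemma ppow_mul : ppow p (n - s) * ppow p (n + s) = (p ^ n)%:R.
Proof.
have sn := Hpl.1.
rewrite /ppow -sqrtCM ?nnegrE ?ler0n // -natrM -expnD.
have -> : (n - s + (n + s) = n * 2)%N by lia.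
by rewrite expnM natrX sqrCK ?ler0n.
Qed.

Lemma K2 : K ^+ 2 = eta * (p ^ (n + s))%:R.
Proof. by rewrite /K exprMn /ppow sqrtCK. Qed.

Let solve2 (A B X : algC) : A + B = X -> A - B = X -> A = X /\ B = 0.
Proof.
move=> h1 h2.
have B0 : B = 0.
  have : (A + B) - (A - B) = 0 by rewrite h1 h2 subrr.
  rewrite opprB addrC addrA subrK -mulr2n => /eqP.
  by rewrite mulrn_eq0 /= => /eqP.
by split=> //; rewrite -h1 B0 addr0.
Qed.

Let solve2' (A B X : algC) : A + B = - X -> A - B = X -> A = 0 /\ B = - X.
Proof.
move=> h1 h2.
have A0 : A = 0.
  have : (A + B) + (A - B) = 0 by rewrite h1 h2 addNr.
  rewrite addrACA subrr addr0 -mulr2n => /eqP.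
  by rewrite mulrn_eq0 /= => /eqP.
by split=> //; rewrite -h1 A0 add0r.
Qed.

Lemma diff_val z :
  W 1 z - W (-1) z = eta * ((z \in supp M s f)%:R * K * xiF (fstar z)).
Proof.
have h := dual_inv z; rewrite sum_eps_split in h.
set A := W 1 z; set B := W (-1) z; set e := xiF (fstar z) in h *.
set c := (z \in supp M s f)%:R in h *.
have e2 : eta * eta = 1 by case: eta_pm => ->; rewrite ?mulr1 ?mulrNN ?mulr1.
have pn : (p ^ n)%:R != 0 :> algC by rewrite pnatr_eq0 expn_eq0 negb_and (gtn_eqF p_gt0).
have h3 : (p ^ n)%:R * (eta * (A - B)) = (p ^ n)%:R * (c * K * e).
  rewrite -{1}ppow_mul.
  transitivity ((mu p n s * ppow p (n - s) * (A - B)) * (mu p n s * ppow p (n + s))).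
    by rewrite /eta; ring.
  by rewrite h /K; ring.
have := mulfI pn h3 => h4.
by rewrite -[A - B]mul1r -e2 -mulrA h4.
Qed.


Let eq1N1 : ((1 : algC) == -1) = false.
Proof. by rewrite eq_sym N1neq1. Qed.

Lemma Wval sg : sg = 1 \/ sg = -1 -> forall z,
  W sg z = if (z \in supp M s f) && (eps z == sg * eta)
           then eps z * K * xiF (fstar z) else 0.
Proof.
move=> hsg z.
have hs := walsh_split z; have hd := diff_val z.
case: (boolP (z \in supp M s f)) => zS /=.
- rewrite walsh_in // in hs; rewrite zS /= mul1r in hd.
  move: hs hd; rewrite -(mulrA (eps z)); set X := K * _ => hs hd.
  case: (Hd z zS).1 => Ee; case: eta_pm => Eeta; rewrite Ee Eeta in hs hd *;
    rewrite ?mul1r ?mulN1r in hs hd.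
  + have [E1 E2] := solve2 _ _ _ (esym hs) hd.
    by case: hsg => ->; rewrite ?E1 ?E2 ?mul1r ?mulN1r ?eqxx ?eq1N1.
  + have [E1 E2] := solve2' _ _ (-X) (etrans (esym hs) (esym (opprK X))) hd.
    by case: hsg => ->; rewrite ?E1 ?E2 ?mul1r ?mulN1r ?opprK ?eqxx ?eq1N1 ?N1neq1.
  + have [E1 E2] := solve2' _ _ X (esym hs) hd.
    by case: hsg => ->; rewrite ?E1 ?E2 ?mul1r ?mulN1r ?eqxx ?N1neq1 ?eq1N1.
  + have [E1 E2] := solve2 _ _ (-X) (esym hs) hd.
    by case: hsg => ->; rewrite ?E1 ?E2 ?mul1r ?mulN1r ?opprK ?eqxx ?N1neq1 ?eq1N1.
- rewrite walsh_out // in hs; rewrite (negbTE zS) /= !mul0r mulr0 in hd.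
  have [E1 E2] := solve2 _ _ _ (esym hs) hd.
  by case: hsg => ->; rewrite ?E1 ?E2.
Qed.

Lemma W_scale sg : sg = 1 \/ sg = -1 -> forall t u : nat, (2 <= t)%N ->
  (forall a : 'F_p, a != 0 -> forall x, x \in TS sg -> f (a *: x) = a ^+ t * f x) ->
  (forall a : 'F_p, a != 0 -> (a ^+ u) ^+ (t - 1) = a) ->
  forall a : 'F_p, a != 0 -> exists phi : {rmorphism algC -> algC},
   (forall x, phi (xiF x) = xiF (a ^+ u.+1 * x)) /\
   forall z, phi (W sg z) = W sg (a *: z).
Proof.
move=> hsg t u t2 hom hu a anz.
set c := a ^+ u; have cnz : c != 0 by rewrite expf_neq0.
have bnz : a ^+ u.+1 != 0 by rewrite expf_neq0.
have [phi Hphi] := galois_exists _ bnz.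
exists phi; split => // z.
rewrite /W rmorph_sum [RHS](reindex_inj (can_inj (scalerK cnz))) /=.
apply: eq_big => y.
  apply/idP/idP => [yT|cyT]; first exact: (TS_closed _ hsg _ cnz _ yT).
  by rewrite -(scalerK cnz y); apply: (TS_closed _ hsg) => //; rewrite invr_eq0.
move=> yT; rewrite Hphi hom // bformZl bformZr.
have ct : c ^+ t = a * c.
  by rewrite -(subnK (ltnW t2)) addn1 exprSr hu // .
have cb : a ^+ u.+1 = a * c by rewrite exprS.
by rewrite ct cb; congr xiF; ring.
Qed.

Lemma two_neq0 : (2%:R : 'F_p) != 0.
Proof.
apply/eqP => h; have := val_Fp_nat pr 2; rewrite h /= modn_small //.
exact: p_ge3.
Qed.

Lemma double_inj (x y : 'F_p) : x + x = y + y -> x = y.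
Proof.
move=> h; apply/eqP; rewrite -subr_eq0.
have : (x - y) * 2%:R == 0 by rewrite mulr_natr mulr2n addrACA -opprD h subrr.
by rewrite mulf_eq0 (negbTE two_neq0) orbF.
Qed.

Lemma vec_neq_opp (y : V p n) : y != 0 -> y != - y.
Proof.
move=> ynz; apply: contra ynz => /eqP h.
have : (2%:R : 'F_p) *: y == 0 by rewrite scaler_nat mulr2n {1}h addNr.
by rewrite scaler_eq0 (negbTE two_neq0).
Qed.

Lemma xiF_Aint (x : 'F_p) : xiF x \in Aint.
Proof.
apply: (Aint_unity_root p_gt0); rewrite unity_rootE xiFE -exprM mulnC exprM.
by rewrite (prim_expr_order xi_prim) expr1n.
Qed.

Lemma half_not_Aint (X : algC) : X \in Aint -> 1 + X + X != 0.
Proof.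
move=> XA; apply/negP => /eqP h.
have XE : X = - (2%:R)^-1.
  have two : (2%:R : algC) != 0 by rewrite pnatr_eq0.
  apply: (mulIf two); rewrite mulNr mulVf // mulr_natr mulr2n.
  by apply/eqP; rewrite -subr_eq0 opprK addrC addrA h.
have XQ : X \in Crat by rewrite XE rpredN rpredV rpred_nat.
have /intrP [m Xm] := Cint_rat_Aint XQ XA.
move: h; rewrite Xm -[1]/(1%:~R) -!rmorphD /= => /eqP; rewrite intr_eq0 => /eqP.
lia.
Qed.

Lemma parity_nz (T : {set V p n}) (F : V p n -> 'F_p) :
  0 \in T -> (forall y, y \in T -> - y \in T) ->
  (forall y, y \in T -> F (- y) = F y) -> F 0 = 0 ->
  \sum_(y in T) xiF (F y) != 0.
Proof.
move=> T0 Tcl FN F0.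
rewrite (bigD1 0) //= F0 xiF0.
rewrite (bigID (fun y => (enum_rank y < enum_rank (- y))%N)) /=.
set X := \sum_(i | _) _.
have -> : \sum_(i | (i \in T) && (i != 0) && ~~ (enum_rank i < enum_rank (- i))%N) xiF (F i) = X.
  rewrite (reindex_inj (inv_inj (@opprK _))) /=; apply: eq_big => y.
    rewrite opprK oppr_eq0.
    case: (boolP (y == 0)) => [_|ynz]; first by rewrite !andbF.
    have Tey : (- y \in T) = (y \in T).
      by apply/idP/idP => [/Tcl|/Tcl //]; rewrite opprK.
    rewrite Tey !andbT; case: (y \in T) => //=.
    rewrite -leqNgt leq_eqVlt.
    have -> : (nat_of_ord (enum_rank y) == enum_rank (- y)) = false.
      apply/negP => /eqP h; move/negP: (vec_neq_opp _ ynz); apply.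
      by apply/eqP/enum_rank_inj/val_inj.
    by [].
  move=> /andP[/andP[yT _] _]; rewrite FN //; have := Tcl _ yT; by rewrite opprK.
rewrite addrA; apply: half_not_Aint.
by apply: rpred_sum => y _; exact: xiF_Aint.
Qed.

Lemma eps_pm z : z \in supp M s f -> eps z = 1 \/ eps z = -1.
Proof. by move=> zS; case: (Hd z zS). Qed.

Lemma eps_neq0 z : z \in supp M s f -> eps z != 0.
Proof. by move=> /eps_pm [] ->; rewrite ?oppr_eq0 oner_eq0. Qed.

Lemma Wnz sg : sg = 1 \/ sg = -1 -> forall z,
  (W sg z != 0) = (z \in supp M s f) && (eps z == sg * eta).
Proof.
move=> hsg z; rewrite Wval //.
case: (boolP ((z \in supp M s f) && (eps z == sg * eta))) => [/andP[zS _]|_].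
  rewrite mulf_neq0 ?xiF_neq0 // mulf_neq0 ?K_neq0 //; exact: eps_neq0.
by rewrite eqxx.
Qed.

Lemma eta2 : eta * eta = 1.
Proof. by case: eta_pm => ->; rewrite ?mulr1 ?mulrNN ?mulr1. Qed.

Lemma sg_of e : e = 1 \/ e = -1 -> exists sg : algC, (sg = 1 \/ sg = -1) /\ e = sg * eta.
Proof.
move=> he; exists (e * eta); split; last by rewrite -mulrA eta2 mulr1.
by case: he => ->; case: eta_pm => ->; rewrite ?mul1r ?mulN1r ?opprK; by [left|right].
Qed.

Lemma sg_data sg : sg = 1 \/ sg = -1 -> exists t u : nat,
  [/\ (2 <= t)%N,
      (forall a : 'F_p, a != 0 -> forall x, x \in TS sg -> f (a *: x) = a ^+ t * f x),
      (forall a : 'F_p, a != 0 -> (a ^+ u) ^+ (t - 1) = a),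
      gcdn u (p - 1) = 1%N & ~~ odd t].
Proof.
case: HF => _ _ _ [t [t' [[tb t'b] g1 g1' h1 h2]]].
have ev : forall k, (2 <= k)%N -> gcdn (k - 1) (p - 1) = 1%N -> ~~ odd k.
  move=> k k2 gk; apply/negP => ok.
  have : (2 %| gcdn (k - 1) (p - 1))%N.
    rewrite dvdn_gcd !dvdn2 !oddB ?ok ?podd //; exact: ltnW k2.
  by rewrite gk.
case => ->.
- move/andP: tb => [t2 _]; have [u [_ gu hu]] := exp_inverse _ t2 g1.
  by exists t, u; split => //; exact: ev.
- move/andP: t'b => [t2 _]; have [u [_ gu hu]] := exp_inverse _ t2 g1'.
  by exists t', u; split => //; exact: ev.
Qed.

Lemma W_nz_scale sg : sg = 1 \/ sg = -1 -> forall a : 'F_p, a != 0 -> forall z,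
  (W sg (a *: z) != 0) = (W sg z != 0).
Proof.
move=> hsg a anz z.
have [t [u [t2 hom hu _ _]]] := sg_data _ hsg.
have [phi [_ Hw]] := W_scale _ hsg _ _ t2 hom hu _ anz.
by rewrite -Hw fmorph_eq0.
Qed.

Lemma scale_class e : e = 1 \/ e = -1 -> forall a : 'F_p, a != 0 -> forall z,
  z \in supp M s f -> eps z = e -> a *: z \in supp M s f /\ eps (a *: z) = e.
Proof.
move=> he a anz z zS ez.
have [sg [hsg esg]] := sg_of _ he.
have : W sg z != 0 by rewrite Wnz // zS ez esg eqxx.
rewrite -(W_nz_scale _ hsg _ anz) Wnz // => /andP[aS /eqP ->].
by rewrite esg.
Qed.

Lemma out_scale (a : 'F_p) : a != 0 -> forall z,
  z \notin supp M s f -> a *: z \notin supp M s f.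
Proof.
move=> anz z zS; apply/negP => aS.
have [sg [hsg esg]] := sg_of _ (eps_pm _ aS).
have : W sg (a *: z) != 0 by rewrite Wnz // aS esg eqxx.
by rewrite W_nz_scale // Wnz // (negbTE zS).
Qed.

Lemma rmorph_pm (phi : {rmorphism algC -> algC}) e : e = 1 \/ e = -1 -> phi e = e.
Proof. by case => ->; rewrite ?rmorph1 ?rmorphN1. Qed.

Lemma fstar_class e : e = 1 \/ e = -1 -> exists h : nat,
  [/\ (0 < h)%N, gcdn (h - 1) (p - 1) = 1%N &
     forall a : 'F_p, a != 0 -> forall z, z \in supp M s f -> eps z = e ->
       fstar (a *: z) = a ^+ h * fstar z].
Proof.
move=> he.
have [sg [hsg esg]] := sg_of _ he.
have [t [u [t2 hom hu gu _]]] := sg_data _ hsg.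
exists u.+1; split => //; first by rewrite subSS subn0.
move=> a anz z zS ez.
have [phi [Hx Hw]] := W_scale _ hsg _ _ t2 hom hu _ anz.
have [azS eaz] := scale_class _ he _ anz _ zS ez.
have W1 : W sg z = e * K * xiF (fstar z) by rewrite Wval // zS ez esg eqxx.
have W2 : W sg (a *: z) = e * K * xiF (fstar (a *: z)).
  by rewrite Wval // azS eaz esg eqxx.
have := Hw z; rewrite W1 W2 rmorphM [phi (e * K)]rmorphM /= Hx rmorph_pm // -!mulrA.
have enz : e != 0 by case: he => ->; rewrite ?oppr_eq0 oner_eq0.
move=> /(mulfI enz) h.
have h2 : phi (K ^+ 2) * xiF (a ^+ u.+1 * fstar z) ^+ 2 = K ^+ 2 * xiF (fstar (a *: z)) ^+ 2.
  by rewrite rmorphXn -!exprMn h /K mulrA.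
rewrite K2 rmorphM rmorph_pm ?rmorph_nat in h2; last exact: eta_pm.
rewrite -K2 in h2; have K2nz : K ^+ 2 != 0 by rewrite expf_neq0 // K_neq0.
move: (mulfI K2nz h2); rewrite !expr2 -!xiF_add => /xiF_inj /double_inj.
by move=> ->.
Qed.

Lemma type_rel : 0 \in supp M s f /\ eps 0 = epss 0 * eta.
Proof.
have htau := epss_pm 0.
have [t [u [t2 hom _ _ tev]]] := sg_data _ htau.
have m1 : (-1 : 'F_p) != 0 by rewrite oppr_eq0 oner_eq0.
have : W (epss 0) 0 != 0.
  rewrite /W; under eq_bigr do rewrite bform0l subr0.
  apply: parity_nz.
  - by rewrite inE.
  - by move=> y yT; rewrite -scaleN1r; apply: TS_closed.
  - by move=> y yT; rewrite -scaleN1r hom // -signr_odd (negbTE tev) expr0 mul1r.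
  - by case: HF.
by rewrite Wnz // => /andP[zS /eqP].
Qed.

Lemma main_sec :
  (forall a : 'F_p, a != 0 -> forall alpha : V p n,
     [/\ alpha \notin supp M s f -> a *: alpha \notin supp M s f,
         alpha \in Bplus M s f eps -> a *: alpha \in Bplus M s f eps
       & alpha \in Bminus M s f eps -> a *: alpha \in Bminus M s f eps]) /\
  (exists h : nat, [/\ (0 < h)%N, gcdn (h - 1) (p - 1) = 1%N &
     forall a : 'F_p, a != 0 -> forall alpha, alpha \in Bplus M s f eps ->
       fstar (a *: alpha) = a ^+ h * fstar alpha]) /\
  (exists h' : nat, [/\ (0 < h')%N, gcdn (h' - 1) (p - 1) = 1%N &
     forall a : 'F_p, a != 0 -> forall alpha, alpha \in Bminus M s f eps ->
       fstar (a *: alpha) = a ^+ h' * fstar alpha]) /\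
  (((p ^ (n + s)) %% 4 = 1)%N -> type_plus eps = type_plus epss) /\
  (((p ^ (n + s)) %% 4 = 3)%N -> type_plus eps != type_plus epss).
Proof.
split; [|split; [|split; [|split]]].
- move=> a anz z; split.
  + exact: out_scale.
  + move=> /setIdP [zS /eqP ez]; apply/setIdP.
    by have [-> ->] := scale_class _ pm1 _ anz _ zS ez.
  + move=> /setIdP [zS /eqP ez]; apply/setIdP.
    by have [-> ->] := scale_class _ pmN1 _ anz _ zS ez.
- have [h [h0 hg hh]] := fstar_class _ pm1.
  exists h; split => // a anz z; move=> /setIdP [zS /eqP ez]; exact: hh.
- have [h [h0 hg hh]] := fstar_class _ pmN1.
  exists h; split => // a anz z; move=> /setIdP [zS /eqP ez]; exact: hh.
- move=> h4; have [_ E] := type_rel.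
  have e1 : eta = 1 by rewrite /eta /mu h4 eqxx expr1n.
  by rewrite /type_plus E e1 mulr1.
- move=> h4; have [_ E] := type_rel.
  have e1 : eta = -1 by rewrite /eta /mu h4 /= sqrCi.
  rewrite /type_plus E e1.
  by case: (epss_pm 0) => ->; rewrite ?mul1r ?mulr1 ?mulN1r ?opprK ?eqxx ?N1neq1.
Qed.
End Basics.

Theorem lemma8 (p n s : nat) (M : 'M['F_p]_n) (f fstar : V p n -> 'F_p)
    (eps epss : V p n -> algC) :
  prime p -> odd p -> nondeg_symmetric M ->
  plateaued M s f ->
  is_dual M s f eps fstar ->
  is_dual_sign M s f fstar epss ->
  classF M s f fstar epss ->
  (* (1) *)
  (forall a : 'F_p, a != 0 -> forall alpha : V p n,
     [/\ alpha \notin supp M s f -> a *: alpha \notin supp M s f,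
         alpha \in Bplus M s f eps -> a *: alpha \in Bplus M s f eps
       & alpha \in Bminus M s f eps -> a *: alpha \in Bminus M s f eps]) /\
  (* (2) *)
  (exists h : nat, [/\ (0 < h)%N, gcdn (h - 1) (p - 1) = 1%N &
     forall a : 'F_p, a != 0 -> forall alpha, alpha \in Bplus M s f eps ->
       fstar (a *: alpha) = a ^+ h * fstar alpha]) /\
  (exists h' : nat, [/\ (0 < h')%N, gcdn (h' - 1) (p - 1) = 1%N &
     forall a : 'F_p, a != 0 -> forall alpha, alpha \in Bminus M s f eps ->
       fstar (a *: alpha) = a ^+ h' * fstar alpha]) /\
  (* (3) *)
  (((p ^ (n + s)) %% 4 = 1)%N -> type_plus eps = type_plus epss) /\
  (((p ^ (n + s)) %% 4 = 3)%N -> type_plus eps != type_plus epss).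
Proof.
move=> pr podd HM Hpl Hd Hds HF.
exact: (@main_sec p pr podd n M HM s f fstar eps epss Hpl Hd Hds HF).
Qed.
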